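(* Let $m\ge1$ be an integer, let $y\in(1,H]$ for some real $H>1$, and let $\theta_1,\ldots,\theta_m\in[0,\pi]$. Let \[ P(t)=(t-y)(t-y^{-1})\prod_{k=1}^m(t-e^{i\theta_k})(t-e^{-i\theta_k})=t^{2m+2}+a_1t^{2m+1}+\cdots+a_{m+1}t^{m+1}+\cdots+a_1t+1, \] and for indices $j>m+1$ write $a_j:=a_{2m+2-j}$ (so that $a_j$ is the coefficient of both $t^{j}$ and $t^{2m+2-j}$). Put $z_0:=y+y^{-1}$ and $z_k:=2\cos\theta_k$ for $1\le k\le m$. Then for $1\le i\le\lfloor m/2\rfloor+1$, \[ a_{2i-1}=-\sum_{j=0}^{i-1}\binom{m-2j}{i-j-1}\sum_{0\le k_1<\cdots<k_{2j+1}\le m}\ \prod_{s=1}^{2j+1}z_{k_s},\qquad a_{2i}=\sum_{j=0}^{i}\binom{m-2j+1}{i-j}\sum_{0\le k_1<\cdots<k_{2j}\le m}\ \prod_{s=1}^{2j}z_{k_s}. \] *)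

(* Defs.v *)
From HB Require Import structures.
From mathcomp Require Import all_boot all_order all_algebra.
From mathcomp Require Import reals trigo.
From mathcomp Require Import complex.
Set Implicit Arguments. Unset Strict Implicit. Unset Printing Implicit Defensive.
Import Order.TTheory GRing.Theory Num.Theory.
Local Open Scope ring_scope.
Local Open Scope complex_scope.

Definition expi (R : realType) (th : R) : R[i] := (cos th) +i* (sin th).

Definition Ppoly (R : realType) (m : nat) (y : R) (th : nat -> R) : {poly R[i]} :=
  ('X - (y%:C)%:P) * ('X - ((y^-1)%:C)%:P) *
  \prod_(1 <= k < m.+1) (('X - (expi (th k))%:P) * ('X - (expi (- th k))%:P)).

Definition acoef (R : realType) (m : nat) (y : R) (th : nat -> R) (j : nat) : R[i] :=
  if (j <= m.+1)%N then (Ppoly m y th)`_(2 * m + 2 - j)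
  else (Ppoly m y th)`_(2 * m + 2 - (2 * m + 2 - j)).

Definition zval (R : realType) (y : R) (th : nat -> R) (k : nat) : R :=
  if k == 0%N then y + y^-1 else 2 * cos (th k).

Definition esumz (R : realType) (m : nat) (y : R) (th : nat -> R) (r : nat) : R :=
  \sum_(S : {set 'I_m.+1} | #|S| == r) \prod_(k in S) zval y th k.

(* Main.v *)
Require Import Defs.
From HB Require Import structures.
From mathcomp Require Import all_boot all_order all_algebra.
From mathcomp Require Import reals trigo.
From mathcomp Require Import complex.
From mathcomp Require Import ring zify.
Import Order.TTheory GRing.Theory Num.Theory.
Local Open Scope ring_scope.
Local Open Scope complex_scope.
Set Implicit Arguments. Unset Strict Implicit. Unset Printing Implicit Defensive.

Lemma quad (R : realType) (a b : R[i]) : a * b = 1 ->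
  ('X - a%:P) * ('X - b%:P) = (- (a + b)) *: 'X + ('X^2 + 1) :> {poly R[i]}.
Proof.
move=> ab; have -> : (1 : {poly R[i]}) = a%:P * b%:P by rewrite -polyCM ab.
rewrite -mul_polyC polyCN polyCD; ring.
Qed.

Lemma expiM (R : realType) (t : R) : expi t * expi (- t) = 1.
Proof.
rewrite /expi cosN sinN; simpc. by rewrite -!expr2 cos2Dsin2 mulrC addNr.
Qed.

Lemma expiD (R : realType) (t : R) : expi t + expi (- t) = (2 * cos t)%:C.
Proof.
rewrite /expi cosN sinN; simpc. by rewrite complexr0 mulr_natl mulr2n.
Qed.

Definition cz (R : realType) (y : R) (th : nat -> R) (k : nat) : R[i] := (zval y th k)%:C.

Lemma Pprod (R : realType) (m : nat) (y : R) (th : nat -> R) : y != 0 ->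
  Ppoly m y th = \prod_(k < m.+1) ((- cz y th k) *: 'X + ('X^2 + 1)).
Proof.
move=> y0; rewrite /Ppoly big_add1 /= big_mkord big_ord_recl; congr (_ * _).
  rewrite quad; first by rewrite /cz /zval /= -rmorphD.
  by rewrite -rmorphM divff.
apply: eq_bigr => k _; rewrite quad ?expiM // expiD /cz /zval /=.
by [].
Qed.

Lemma collapse (F : nzRingType) (M q : nat) :
  \sum_(l < M.+1) (('X^(2 * l) : {poly F})`_q *+ 'C(M, l)) =
  (if ~~ odd q then 'C(M, q./2) else 0)%:R.
Proof.
under eq_bigr => l _ do rewrite coefXn.
case: ifP => oq.
  have qe : q = (2 * q./2)%N by rewrite -{1}(odd_double_half q) (negbTE oq) add0n -mul2n.
  case: (ltnP q./2 M.+1) => hq.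
    rewrite (bigD1 (Ordinal hq)) //= big1 ?addr0.
      by rewrite -qe eqxx mulr1n.
    move=> l /eqP hl; rewrite qe.
    case: eqP => [/eqP|]; last by rewrite mul0rn.
    rewrite eqn_pmul2l // => /eqP h; exfalso; apply: hl; apply: val_inj; by rewrite /= h.
  rewrite big1 ?bin_small //.
  move=> l _; rewrite qe; case: eqP => [/eqP|]; last by rewrite mul0rn.
  rewrite eqn_pmul2l // => /eqP h; exfalso; move: (ltn_ord l); rewrite -h.
  by rewrite ltnNge hq.
rewrite big1 // => l _; case: eqP => [h|]; last by rewrite mul0rn.
by move: oq; rewrite h oddM andFb.
Qed.

Definition D (m r n : nat) : nat :=
  if (r <= n)%N && ~~ odd (n - r) then 'C(m.+1 - r, (n - r)./2) else 0.

Lemma term (R : realType) (m : nat) (y : R) (th : nat -> R) (n : nat) (J : {set 'I_m.+1}) :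
  (\prod_(i < m.+1) (if i \in J then (- cz y th i) *: 'X else ('X^2+1)))`_n =
  (-1)^+#|J| * (\prod_(i in J) cz y th i) * (D m #|J| n)%:R.
Proof.
rewrite (bigID (fun i => i \in J)) /=.
have -> : \prod_(i in J) (if i \in J then - cz y th i *: 'X else 'X^2 + 1) =
  \prod_(i in J) (- cz y th i *: 'X) by apply: eq_bigr => i ->.
have -> : \prod_(i < m.+1 | i \notin J) (if i \in J then - cz y th i *: 'X else 'X^2 + 1) =
  \prod_(i < m.+1 | i \notin J) ('X^2 + 1) by apply: eq_bigr => i /negbTE ->.
have -> : \prod_(i < m.+1 | i \notin J) ('X^2 + 1 : {poly R[i]}) = ('X^2+1)^+(m.+1 - #|J|).
  have hc : (m.+1 - #|J|)%N = #|~: J| by have := cardsC J; rewrite card_ord => E; rewrite -[X in (X - _)%N]E addKn.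
  by rewrite hc -prodr_const; apply: eq_bigl => i; rewrite in_setC.
rewrite scaler_prodr prodrN -scalerAl coefZ coefXnM.
rewrite /D; case: ltnP => hn /=.
  by rewrite mulr0n.
rewrite exprD1n coef_sum.
congr (_ * _). rewrite (eq_bigr (fun l : 'I__ => ('X^(2 * l))`_(n - #|J|) *+ 'C(m.+1 - #|J|, l))); last first. move=> l _. rewrite -exprM; exact: coefMn.
by rewrite collapse; case: ifP => _; rewrite ?mulr0.
Qed.

Lemma coefP (R : realType) (m : nat) (y : R) (th : nat -> R) (n : nat) : y != 0 ->
  (Ppoly m y th)`_n =
  \sum_(r < m.+2) ((-1)^+r * (esumz m y th r)%:C * (D m r n)%:R).
Proof.
move=> y0; rewrite Pprod // bigA_distr coef_sum.
under eq_bigr => J _ do rewrite term.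
rewrite (partition_big (fun J : {set 'I_m.+1} => (inord #|J| : 'I_m.+2)) xpredT) //=.
apply: eq_bigr => r _.
have E : forall J : {set 'I_m.+1}, (inord #|J| == r :> 'I_m.+2) = (#|J| == r).
  have cJ : forall J : {set 'I_m.+1}, (#|J| < m.+2)%N.
    by move=> J; rewrite ltnS; apply: leq_trans (max_card _) _; rewrite card_ord.
  move=> J; apply/eqP/eqP => [<-|h]; first by rewrite inordK.
  by apply: val_inj; rewrite /= inordK.
rewrite (eq_bigl (fun J : {set 'I_m.+1} => #|J| == r)); last by move=> J; rewrite E.
have -> : \sum_(J : {set 'I_m.+1} | #|J| == r)
     ((-1) ^+ #|J| * \prod_(i0 in J) cz y th i0 * (D m #|J| n)%:R) =
   \sum_(J : {set 'I_m.+1} | #|J| == r) ((-1)^+r * (D m r n)%:R * \prod_(i in J) cz y th i).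
  apply: eq_bigr. move=> J. move/eqP. move=> ->. rewrite mulrAC. reflexivity.
rewrite -big_distrr /= mulrAC; congr (_ * _).
rewrite /esumz rmorph_sum; congr (_ * _); apply: eq_bigr => J _; rewrite rmorph_prod.
by [].
Qed.

Lemma Dsame (m a c : nat) (b : bool) :
  D m (2*a + b) (2*c + b) = if (a <= c)%N then 'C(m.+1 - (2*a+b), c - a) else 0%N.
Proof.
rewrite /D; case: leqP => h /=.
  have -> : (a <= c)%N by lia.
  have -> : (2*c + b - (2*a + b) = (c - a).*2)%N by lia.
  by rewrite odd_double doubleK.
by have -> : (a <= c)%N = false by lia.
Qed.

Lemma Ddiff1 (m a c : nat) : D m (2*a) (2*c+1) = 0%N.
Proof.
rewrite /D; case: leqP => h //=.
have -> : (2*c + 1 - 2*a = (c - a).*2.+1)%N by lia.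
by rewrite /= odd_double.
Qed.

Lemma Ddiff2 (m a c : nat) : D m (2*a+1) (2*c) = 0%N.
Proof.
rewrite /D; case: leqP => h //=.
have -> : (2*c - (2*a + 1) = (c - a.+1).*2.+1)%N by lia.
by rewrite /= odd_double.
Qed.

Lemma sum_pair (V : nmodType) (N : nat) (F : nat -> V) :
  \sum_(0 <= r < 2 * N) F r = \sum_(0 <= a < N) (F (2 * a)%N + F (2 * a + 1)%N).
Proof.
elim: N => [|N IH]; first by rewrite !big_geq.
have -> : (2 * N.+1 = (2 * N).+2)%N by lia.
rewrite [RHS]big_nat_recr //= -IH.
rewrite big_nat_recr //= big_nat_recr //= addn1 addrA.
by [].
Qed.

Lemma sum_ext (V : nmodType) (a b : nat) (F : nat -> V) : (a <= b)%N ->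
  (forall r, (a <= r)%N -> (r < b)%N -> F r = 0) ->
  \sum_(0 <= r < b) F r = \sum_(0 <= r < a) F r.
Proof.
move=> ab h; rewrite (big_cat_nat (leq0n a) ab) /=.
have -> : \sum_(a <= r < b) F r = 0.
  by rewrite big_nat_cond big1 // => r /andP[/andP[h1 h2] _]; exact: h.
by rewrite addr0.
Qed.

Lemma esumz_big (R : realType) (m : nat) (y : R) (th : nat -> R) (r : nat) :
  (m.+1 < r)%N -> esumz m y th r = 0.
Proof.
move=> hr; rewrite /esumz big_pred0 // => S; apply/negbTE/eqP => h.
have := max_card (mem S); rewrite card_ord h; lia.
Qed.

Lemma key_odd (m q c a : nat) : (1 <= q)%N -> (2*q <= m+2)%N -> c = (m.+1 - q)%N -> (2*a <= m)%N ->
  (if (a <= c)%N then 'C(m.+1 - (2*a+1), c - a) else 0%N) =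
  (if (a < q)%N then 'C(m - 2*a, q - a - 1) else 0%N).
Proof.
move=> i1 hi -> ha; case: (ltnP a q) => h.
  rewrite ifT; last by lia.
  have -> : (m.+1 - (2*a+1) = m - 2*a)%N by lia.
  have -> : (m.+1 - q - a = (m - 2*a) - (q - a - 1))%N by lia.
  by rewrite bin_sub //; lia.
case: ifP => // _; rewrite bin_small //; lia.
Qed.

Lemma key_even (m q c a : nat) : (2*q <= m+2)%N ->
  (c = (m.+1 - q)%N \/ c = q) -> (2*a <= m.+1)%N ->
  (if (a <= c)%N then 'C(m.+1 - 2*a, c - a) else 0%N) =
  (if (a < q.+1)%N then 'C(m.+1 - 2*a, q - a) else 0%N).
Proof.
move=> hi hc ha; case: hc => ->.
  case: (ltnP a q.+1) => h.
    rewrite ifT; last by lia.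
    have -> : (m.+1 - q - a = (m.+1 - 2*a) - (q - a))%N by lia.
    by rewrite bin_sub //; lia.
  case: ifP => // _; rewrite bin_small //; lia.
by case: (ltnP a q.+1) => h; [rewrite ifT | rewrite ifF]; lia.
Qed.

Lemma sum_ext_if (V : nmodType) (a b : nat) (G : nat -> V) : (a <= b)%N ->
  \sum_(0 <= j < a) G j = \sum_(0 <= j < b) (if (j < a)%N then G j else 0).
Proof.
move=> ab; rewrite (sum_ext (a:=a)) //; last by move=> r h1 h2; rewrite ltnNge h1.
by apply: eq_big_nat => j /andP[_ ->].
Qed.

Lemma coef_pairs (R : realType) (m : nat) (y : R) (th : nat -> R) (n : nat) : y != 0 ->
  (Ppoly m y th)`_n =
  \sum_(0 <= a < m.+2)
    ((-1)^+(2 * a) * (esumz m y th (2 * a))%:C * (D m (2 * a) n)%:R +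
     (-1)^+(2 * a + 1) * (esumz m y th (2 * a + 1))%:C * (D m (2 * a + 1) n)%:R).
Proof.
move=> y0; rewrite coefP //.
pose F := (fun r : nat => (-1)^+r * (esumz m y th r)%:C * (D m r n)%:R : R[i]).
transitivity (\sum_(0 <= r < 2 * m.+2) F r); last exact: sum_pair.
rewrite (sum_ext (a := m.+2)); first by rewrite big_mkord.
  lia.
by move=> r h1 h2; rewrite /F esumz_big // rmorph0 mulr0 mul0r.
Qed.

Lemma sgn_even (F : pzRingType) (a : nat) : (-1 : F)^+(2 * a) = 1.
Proof. by rewrite exprM sqrrN expr1n expr1n. Qed.

Lemma sgn_odd (F : pzRingType) (a : nat) : (-1 : F)^+(2 * a + 1) = -1.
Proof. by rewrite exprD sgn_even expr1 mul1r. Qed.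

Lemma Dsame1 (m a c : nat) :
  D m (2 * a + 1) (2 * c + 1) = if (a <= c)%N then 'C(m.+1 - (2 * a + 1), c - a) else 0%N.
Proof. exact: (Dsame m a c true). Qed.

Lemma Dsame0 (m a c : nat) :
  D m (2 * a) (2 * c) = if (a <= c)%N then 'C(m.+1 - 2 * a, c - a) else 0%N.
Proof. by have := Dsame m a c false; rewrite /= !addn0. Qed.

Unset Implicit Arguments.

Theorem lemma1 (R : realType) (m : nat) (H y : R) (th : nat -> R) :
  (1 <= m)%N -> 1 < H -> 1 < y -> y <= H ->
  (forall k, (1 <= k <= m)%N -> 0 <= th k <= pi) ->
  forall i : nat, (1 <= i <= m./2.+1)%N ->
    acoef m y th (2 * i - 1) =
      (- \sum_(0 <= j < i) ('C(m - 2 * j, i - j - 1))%:R * esumz m y th (2 * j + 1))%:C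
    /\
    acoef m y th (2 * i) =
      (\sum_(0 <= j < i.+1) ('C(m.+1 - 2 * j, i - j))%:R * esumz m y th (2 * j))%:C.
Proof.
move=> m1 _ y1 _ _ i /andP[i1 im].
have y0 : y != 0 by apply: lt0r_neq0; apply: lt_trans y1.
have hi : (2 * i <= m + 2)%N.
  move: im; have := odd_double_half m; case: (odd m) => /= E; lia.
split.
  rewrite /acoef ifT; last by lia.
  have -> : (2 * m + 2 - (2 * i - 1) = 2 * (m.+1 - i) + 1)%N by lia.
  rewrite coef_pairs // rmorphN rmorph_sum -sumrN [RHS](sum_ext_if (b := m.+2)); last by lia.
  apply: eq_big_nat => a /andP[_ ha].
  rewrite Ddiff1 mulr0n mulr0 add0r sgn_odd Dsame1.
  case: (leqP (2 * a) m) => h2a.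
    rewrite (key_odd (q := i)) //.
    case: ifP => _; last by rewrite mulr0n mulr0.
    by rewrite rmorphM /= rmorph_nat; ring.
  rewrite esumz_big; last by lia.
  by rewrite rmorph0 mulr0 mul0r; case: ifP => _ //; rewrite mulr0 rmorph0 oppr0.
have [c [hc Ec]] : exists c, (c = (m.+1 - i)%N \/ c = i) /\ acoef m y th (2 * i) = (Ppoly m y th)`_(2 * c).
  rewrite /acoef; case: (leqP (2 * i) m.+1) => h.
    exists (m.+1 - i)%N; split; first by left.
    congr (_`__); lia.
  exists i; split; first by right.
  congr (_`__); lia.
rewrite Ec coef_pairs // rmorph_sum [RHS](sum_ext_if (b := m.+2)); last by lia.
apply: eq_big_nat => a /andP[_ ha].
rewrite Ddiff2 mulr0n mulr0 addr0 sgn_even Dsame0 mul1r.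
case: (leqP (2 * a) m.+1) => h2a.
  rewrite (key_even (q := i)) //.
  case: ifP => _; last by rewrite mulr0n mulr0.
  by rewrite rmorphM /= rmorph_nat mulrC.
rewrite esumz_big; last by lia.
by rewrite rmorph0 mul0r; case: ifP => _ //; rewrite mulr0 rmorph0.
Qed.
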